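(* Let $r\geq 2$ and let $A$ be a complex $r$-matrix of order $n_1\times\cdots\times n_r$, with slices $A^{(k)}_s$ ($k\in[r]$, $s\in[n_k]$). Then \[ \|A\|_r^r\leq \max_{a_{i_1,\ldots,i_r}\neq 0}\,|A^{(1)}_{i_1}|_1\cdots|A^{(r)}_{i_r}|_1 , \] where the maximum is over all index tuples $(i_1,\ldots,i_r)\in[n_1]\times\cdots\times[n_r]$ with $a_{i_1,\ldots,i_r}\neq 0$.
   Context: An $r$-matrix $A$ of order $n_1\times\cdots\times n_r$ is a function on $[n_1]\times\cdots\times[n_r]$, with values $a_{i_1,\ldots,i_r}$. For $k\in[r]$ and $s\in[n_k]$, the slice $A^{(k)}_s$ is the $(r-1)$-matrix obtained from $A$ by fixing $i_k=s$; $|A^{(k)}_s|_1$ denotes the sum of the absolute values of its entries. The linear form of $A$ is $L_A(\mathbf{x}^{(1)},\ldots,\mathbf{x}^{(r)})=\sum_{i_1,\ldots,i_r}a_{i_1,\ldots,i_r}\overline{x^{(1)}_{i_1}}\cdots\overline{x^{(r)}_{i_r}}$ for $\mathbf{x}^{(k)}\in\mathbb{C}^{n_k}$. For real $p\geq1$, the spectral $p$-norm is $\|A\|_p=\max\{|L_A(\mathbf{x}^{(1)},\ldots,\mathbf{x}^{(r)})| : |\mathbf{x}^{(1)}|_p=\cdots=|\mathbf{x}^{(r)}|_p=1\}$, where $|\cdot|_p$ is the usual $\ell^p$ norm of a complex vector. *)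

(* Defs.v *)
From HB Require Import structures.
From mathcomp Require Import all_boot all_order all_algebra.
From mathcomp Require Import all_classical all_reals all_analysis.
From mathcomp Require Import complex.
Set Implicit Arguments. Unset Strict Implicit. Unset Printing Implicit Defensive.
Import Order.TTheory GRing.Theory Num.Theory.
Local Open Scope ring_scope.
Local Open Scope classical_set_scope.

Definition tidx (r : nat) (n : 'I_r -> nat) := {dffun forall k : 'I_r, 'I_(n k)}.

Definition rmatrix (R : realType) (r : nat) (n : 'I_r -> nat) := tidx n -> R[i].

Definition cabs (R : realType) (z : R[i]) : R := Normc.normc z.

Definition slice_norm1 (R : realType) r (n : 'I_r -> nat) (A : rmatrix R n)
  (k : 'I_r) (s : 'I_(n k)) : R :=
  \sum_(i : tidx n | i k == s) cabs (A i).

Definition lpnorm (R : realType) (p : R) m (x : 'I_m -> R[i]) : R :=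
  (\sum_(j < m) cabs (x j) `^ p) `^ p^-1.

Definition linform (R : realType) r (n : 'I_r -> nat) (A : rmatrix R n)
  (x : forall k : 'I_r, 'I_(n k) -> R[i]) : R[i] :=
  \sum_(i : tidx n) A i * \prod_(k < r) conjc (x k (i k)).

(* spectral p-norm: max (here sup) of |L_A| over unit vectors in l^p *)
Definition spec_norm (R : realType) (p : R) r (n : 'I_r -> nat) (A : rmatrix R n) : R :=
  sup [set y : R | exists x : forall k : 'I_r, 'I_(n k) -> R[i],
        (forall k, lpnorm p (x k) = 1) /\ y = cabs (linform A x)].

Arguments slice_norm1 {R r n} A k s.
Arguments lpnorm {R} p {m} x.
Arguments linform {R r n} A x.
Arguments spec_norm {R} p {r n} A.

(* Main.v *)
Require Import Defs.
From HB Require Import structures.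
From mathcomp Require Import all_boot all_order all_algebra.
From mathcomp Require Import all_classical all_reals all_analysis.
From mathcomp Require Import complex.
Import Order.TTheory GRing.Theory Num.Theory.
Local Open Scope ring_scope.

Section H.
Variable R : realType.

Lemma cabs_ge0 (z : R[i]) : 0 <= cabs z.
Proof. by case: z => a b; rewrite /cabs /Normc.normc sqrtr_ge0. Qed.

Lemma cabs_conj (z : R[i]) : cabs (conjc z) = cabs z.
Proof. by case: z => a b; rewrite /cabs /Normc.normc /= sqrrN. Qed.

Lemma cabsM (z w : R[i]) : cabs (z * w) = cabs z * cabs w.
Proof. exact: Normc.normcM. Qed.

Lemma cabs_sum (I : Type) (s : seq I) (P : pred I) (F : I -> R[i]) :
  cabs (\sum_(i <- s | P i) F i) <= \sum_(i <- s | P i) cabs (F i).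
Proof.
elim/big_rec2: _ => [|i y z _ Hz]; first by by rewrite /cabs /Normc.normc /= expr0n /= addr0 sqrtr0.
apply: le_trans (le_normcD _ _) _; exact: lerD.
Qed.

Lemma cabs_prod (I : Type) (s : seq I) (F : I -> R[i]) :
  cabs (\prod_(i <- s) F i) = \prod_(i <- s) cabs (F i).
Proof.
elim/big_rec2: _ => [|i y z _ Hz]; first exact: Normc.normc1.
by rewrite cabsM Hz.
Qed.

Lemma amgm (r : nat) (g : 'I_r -> R) : (0 < r)%N -> (forall k, 0 <= g k) ->
  \prod_(k < r) g k <= (\sum_(k < r) g k ^+ r) / r%:R.
Proof.
move=> r0 g0.
have H := @leif_AGM R _ predT (fun k : 'I_r => g k ^+ r) (fun k _ => exprn_ge0 r (g0 k)).
have {}H : (\prod_(k < r) g k) ^+ r <= ((\sum_(k < r) g k ^+ r) / r%:R) ^+ r.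
  by rewrite -prodrXl; move: H.1; rewrite card_ord.
rewrite -(ler_pXn2r r0) // ?nnegrE ?prodr_ge0 // divr_ge0 // sumr_ge0 // => k _.
exact: exprn_ge0.
Qed.


Lemma powR_prod (I : Type) (s : seq I) (F : I -> R) (e : R) :
  (forall i, 0 <= F i) -> \prod_(i <- s) (F i `^ e) = (\prod_(i <- s) F i) `^ e.
Proof.
move=> F0; elim: s => [|a s IH]; first by rewrite !big_nil powR1.
rewrite !big_cons IH powRM //; exact: prodr_ge0.
Qed.

Lemma rootK (r : nat) (t : R) : (0 < r)%N -> 0 <= t -> (t `^ (r%:R^-1)) ^+ r = t.
Proof.
move=> r0 t0; rewrite -powR_mulrn ?powR_ge0 // -powRrM mulVf ?powRr1 //.
by rewrite pnatr_eq0 -lt0n.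
Qed.

Lemma Krootr (r : nat) (t : R) : (0 < r)%N -> 0 <= t -> (t ^+ r) `^ (r%:R^-1) = t.
Proof.
move=> r0 t0; rewrite -powR_mulrn // -powRrM mulfV ?powRr1 //.
by rewrite pnatr_eq0 -lt0n.
Qed.

End H.
Section M.
Variables (R : realType) (r : nat) (n : 'I_r -> nat) (A : rmatrix R n).
Hypothesis r0 : (0 < r)%N.

Let w k s := slice_norm1 A k s.
Let M := \big[Num.max/0]_(i : tidx n | A i != 0) \prod_(k < r) slice_norm1 A k (i k).
Let e : R := (r%:R)^-1.

Lemma w_ge0 k s : 0 <= w k s.
Proof. by apply: sumr_ge0 => i _; exact: cabs_ge0. Qed.

Lemma w_ge (i : tidx n) k : cabs (A i) <= w k (i k).
Proof.
rewrite /w /slice_norm1 (bigD1 i) //= lerDl sumr_ge0 // => j _; exact: cabs_ge0.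
Qed.

Lemma M_ge0 : 0 <= M.
Proof. exact: bigmax_ge_id. Qed.

Lemma step2 (i : tidx n) : cabs (A i) <= M `^ e * \prod_(k < r) ((cabs (A i) / w k (i k)) `^ e).
Proof.
have [Ai0|Ain0] := eqVneq (A i) 0.
  rewrite Ai0 /cabs Normc.normc0 mulr_ge0 ?powR_ge0 // prodr_ge0 // => k _.
  exact: powR_ge0.
have c0 : 0 < cabs (A i).
  rewrite lt_def cabs_ge0 andbT; apply/eqP => /Normc.eq0_normc; exact/eqP.
have wp k : 0 < w k (i k) by apply: lt_le_trans c0 (w_ge i k).
rewrite powR_prod; last by move=> k; rewrite divr_ge0 ?cabs_ge0 ?w_ge0.
rewrite -powRM ?M_ge0 ?prodr_ge0 //; last by move=> k _; rewrite divr_ge0 ?cabs_ge0 ?w_ge0.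
rewrite -{1}(@Krootr R r _ r0 (ltW c0)).
apply: ge0_ler_powR; rewrite ?nnegrE ?invr_ge0 ?ler0n ?exprn_ge0 ?(ltW c0) //.
  by rewrite mulr_ge0 ?M_ge0 ?prodr_ge0 // => k _; rewrite divr_ge0 ?cabs_ge0 ?w_ge0.
rewrite big_split /= prodr_const card_ord prodfV.
have W0 : 0 < \prod_(k < r) w k (i k) by apply: prodr_gt0 => k _.
have WM : \prod_(k < r) w k (i k) <= M.
  by rewrite /M; apply: le_bigmax_cond.
rewrite mulrA -ler_pdivrMr ?invr_gt0 // invrK.
by rewrite mulrC ler_pM2r // exprn_gt0.
Qed.

Lemma sumk (x : forall k : 'I_r, 'I_(n k) -> R[i])
  (hx : forall k, \sum_(s < n k) cabs (x k s) ^+ r = 1) k :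
  \sum_(i : tidx n) cabs (A i) / w k (i k) * cabs (x k (i k)) ^+ r <= 1.
Proof.
rewrite (partition_big (fun i : tidx n => i k) predT) //=.
rewrite -(hx k); apply: ler_sum => s _.
rewrite (eq_bigr (fun i => cabs (A i) * ((w k s)^-1 * cabs (x k s) ^+ r))); last first.
  by move=> i /eqP ->; rewrite mulrA.
rewrite -mulr_suml mulrA.
have -> : \sum_(i : tidx n | true && (i k == s)) cabs (A i) = w k s by [].
have [->|wn0] := eqVneq (w k s) 0.
  by rewrite mul0r mul0r exprn_ge0 // cabs_ge0.
by rewrite divff // mul1r.
Qed.

Lemma mainl (x : forall k : 'I_r, 'I_(n k) -> R[i])
  (hx : forall k, \sum_(s < n k) cabs (x k s) ^+ r = 1) :
  cabs (linform A x) <= M `^ e.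
Proof.
pose g := fun (i : tidx n) (k : 'I_r) => (cabs (A i) / w k (i k)) `^ e * cabs (x k (i k)).
have S1 : cabs (linform A x) <= \sum_i cabs (A i) * \prod_(k < r) cabs (x k (i k)).
  rewrite /linform; apply: le_trans; first exact: cabs_sum.
  apply: ler_sum => i _.
  by rewrite cabsM cabs_prod (eq_bigr _ (fun k _ => cabs_conj _ _)).
have S2 i : cabs (A i) * \prod_(k < r) cabs (x k (i k)) <= M `^ e * \prod_(k < r) g i k.
  rewrite /g big_split /= mulrA ler_wpM2r ?step2 // prodr_ge0 // => k _; exact: cabs_ge0.
have S3 i : \prod_(k < r) g i k <=
    (\sum_(k < r) cabs (A i) / w k (i k) * cabs (x k (i k)) ^+ r) / r%:R.
  apply: le_trans (@amgm R r (g i) r0 _) _.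
    by move=> k; rewrite mulr_ge0 ?powR_ge0 ?cabs_ge0.
  apply: ler_wpM2r; first by rewrite invr_ge0 ler0n.
  apply: ler_sum => k _; rewrite /g exprMn rootK // divr_ge0 ?cabs_ge0 ?w_ge0 //.
apply: le_trans S1 _; apply: le_trans (ler_sum _ (fun i _ => S2 i)) _.
rewrite -mulr_sumr -[X in _ <= X]mulr1; apply: ler_wpM2l; first exact: powR_ge0.
apply: le_trans; first by apply: ler_sum => i _; exact: S3.
rewrite -mulr_suml exchange_big /= ler_pdivrMr ?ltr0n // mul1r.
apply: le_trans; first by apply: ler_sum => k _; exact: sumk.
by rewrite sumr_const card_ord.
Qed.

End M.

Theorem theorem1 (R : realType) (r : nat) (n : 'I_r -> nat) (A : rmatrix R n) :
  (2 <= r)%N ->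
  spec_norm (r%:R) A ^+ r <=
    \big[Num.max/0]_(i : tidx n | A i != 0)
       \prod_(k < r) slice_norm1 A k (i k).
Proof.
move=> hr; have r0 : (0 < r)%N by exact: ltnW.
set M := \big[Num.max/0]_(i : tidx n | A i != 0) _.
have Mge0 : 0 <= M by exact: bigmax_ge_id.
rewrite /spec_norm; set S := (X in sup X).
have ub : forall y, S y -> y <= M `^ (r%:R^-1).
  move=> y [x [hx ->]]; apply: mainl => // k.
  have := hx k; rewrite /lpnorm.
  have -> : \sum_(j < n k) cabs (x k j) `^ r%:R = \sum_(j < n k) cabs (x k j) ^+ r.
    by apply: eq_bigr => j _; rewrite powR_mulrn // cabs_ge0.
  move=> h; rewrite -(@rootK R r (\sum_(j < n k) cabs (x k j) ^+ r) r0).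
    by rewrite h expr1n.
  by apply: sumr_ge0 => s _; rewrite exprn_ge0 // cabs_ge0.
have [supS0 supm] : 0 <= sup S /\ sup S <= M `^ (r%:R^-1).
  case: (pselect (S !=set0)%classic) => [ne|e0].
    split; last by apply: ge_sup.
    case: ne => y Sy; apply: le_trans (ub_le_sup _ Sy).
      by case: Sy => x [_ ->]; exact: cabs_ge0.
    by exists (M `^ (r%:R^-1)).
  have -> : S = set0.
    by apply/seteqP; split => // y Sy; exfalso; apply: e0; exists y.
  by rewrite sup0 powR_ge0.
rewrite -(@rootK R r M r0 Mge0).
by rewrite ler_pXn2r // nnegrE powR_ge0.
Qed.
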